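(* Let $G$ be a group with a conjugation-closed generating set $X$ and let $g\in\mathrm{Mon}(X)$. If $x_1,\dots,x_n\in\mathrm{Mon}(X)$ satisfy $x_1\cdots x_n=g$ and $\ell(x_1)+\cdots+\ell(x_n)=\ell(g)$, then for any integers $1\le i_1<\cdots<i_k\le n$ we have $x_{i_1}\cdots x_{i_k}\in[1,g]$.
   Context: $\mathrm{Mon}(X)$ is the submonoid of $G$ generated by $X$; for $h\in\mathrm{Mon}(X)$, $\ell(h)$ is the minimal length of a product of elements of $X$ equal to $h$. For $h,g\in\mathrm{Mon}(X)$, $h\le g$ means there is $h'\in\mathrm{Mon}(X)$ with $hh'=g$ and $\ell(h)+\ell(h')=\ell(g)$; $[1,g]=\{h\in\mathrm{Mon}(X):h\le g\}$. *)

(* Defs.v *)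
From Stdlib Require Import List Arith Lia Classical ClassicalEpsilon.
Import ListNotations.

Record Group := {
  carrier :> Type;
  gmul : carrier -> carrier -> carrier;
  gone : carrier;
  ginv : carrier -> carrier;
  gmulA : forall a b c, gmul a (gmul b c) = gmul (gmul a b) c;
  gmul1l : forall a, gmul gone a = a;
  gmul1r : forall a, gmul a gone = a;
  gmulVl : forall a, gmul (ginv a) a = gone;
  gmulVr : forall a, gmul a (ginv a) = gone
}.

Section Defs.
Variable G : Group.

Definition gprod (w : list G) : G := fold_right (gmul G) (gone G) w.

Definition generates (X : carrier G -> Prop) : Prop :=
  forall g : carrier G, exists w : list (bool * carrier G),
    Forall (fun p => X (snd p)) w /\
    g = gprod (map (fun p : bool * carrier G => if fst p then ginv G (snd p) else snd p) w).

Definition conj_closed (X : G -> Prop) : Prop :=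
  forall x g : G, X x -> X (gmul G (gmul G (ginv G g) x) g).

Definition word_len (X : G -> Prop) (h : G) (n : nat) : Prop :=
  exists w : list G, length w = n /\ Forall X w /\ gprod w = h.

Definition Mon (X : G -> Prop) (h : G) : Prop := exists n, word_len X h n.

Definition is_min_len (X : G -> Prop) (h : G) (n : nat) : Prop :=
  word_len X h n /\ forall m, word_len X h m -> n <= m.

(* l(h): the minimal length of a product of elements of X equal to h
   (meaningful for h in Mon(X); an arbitrary value otherwise) *)
Definition ell (X : G -> Prop) (h : G) : nat :=
  epsilon (inhabits 0) (is_min_len X h).

Definition ple (X : G -> Prop) (h g : G) : Prop :=
  Mon X h /\ Mon X g /\
  exists h', Mon X h' /\ gmul G h h' = g /\ ell X h + ell X h' = ell X g.

Definition interval1 (X : G -> Prop) (g : G) : G -> Prop :=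
  fun h => Mon X h /\ ple X h g.

End Defs.

(* Main.v *)
Require Import Defs.
From Stdlib Require Import List Arith.
From Stdlib Require Import Lia Classical ClassicalEpsilon.
Import ListNotations.

Inductive Sub {A : Type} : list A -> list A -> Prop :=
| Sub_nil : Sub [] []
| Sub_keep a s w : Sub s w -> Sub (a :: s) (a :: w)
| Sub_skip a s w : Sub s w -> Sub s (a :: w).

Lemma Sub_nil_l {A} (l : list A) : Sub [] l.
Proof. induction l; constructor; auto. Qed.

Lemma Sub_map {A B} (f : A -> B) s w : Sub s w -> Sub (map f s) (map f w).
Proof. induction 1; simpl; constructor; auto. Qed.

Lemma Sub_concat {A} (ss ws : list (list A)) : Sub ss ws -> Sub (concat ss) (concat ws).
Proof.
  induction 1; simpl; auto using Sub_nil_l.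
  - induction a; simpl; auto. constructor; auto.
  - induction a; simpl; auto. constructor; auto.
Qed.

Lemma Sub_idx (i : nat -> nat) : forall len a s k,
  (forall j, s <= j < s + k -> a <= i j < a + len) ->
  (forall j, s <= j -> S j < s + k -> i j < i (S j)) ->
  Sub (map i (seq s k)) (seq a len).
Proof.
  induction len as [|len IH]; intros a s k Hb Hi.
  - destruct k. simpl; constructor. specialize (Hb s). lia.
  - destruct k as [|k]. simpl. apply Sub_nil_l.
    simpl. destruct (Nat.eq_dec (i s) a) as [e|ne].
    + rewrite e. constructor. apply IH.
      * intros j Hj. pose proof (Hb j ltac:(lia)).
        destruct j as [|j']; [lia|].
        assert (i j' < i (S j')) by (apply Hi; lia).
        pose proof (Hb j' ltac:(lia)). lia.
      * intros j H1 H2. apply Hi; lia.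
    + constructor. change (Sub (map i (seq s (S k))) (seq (S a) len)).
      apply IH.
      * intros j Hj. pose proof (Hb j ltac:(lia)).
        destruct (Nat.eq_dec j s). subst; lia.
        destruct j as [|j']; [lia|].
        assert (i j' < i (S j')) by (apply Hi; lia).
        pose proof (Hb j' ltac:(lia)). lia.
      * auto.
Qed.

Section Grp.
Variable G : Group.
Variable X : G -> Prop.
Hypothesis hconj : conj_closed G X.

Lemma gprod_app (l1 l2 : list G) : gprod G (l1 ++ l2) = gmul G (gprod G l1) (gprod G l2).
Proof.
  induction l1; simpl. now rewrite gmul1l. rewrite IHl1. apply gmulA.
Qed.

Lemma gprod_concat (ws : list (list G)) : gprod G (concat ws) = gprod G (map (gprod G) ws).
Proof. induction ws; simpl; auto. rewrite gprod_app, IHws. reflexivity. Qed.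

Lemma len_concat {A} (ws : list (list A)) : length (concat ws) = list_sum (map (@length A) ws).
Proof. induction ws; simpl; auto. rewrite length_app, IHws. reflexivity. Qed.

Lemma Sub_conj s w : Sub s w -> Forall X w ->
  exists t, Forall X t /\ length t + length s = length w /\
    gmul G (gprod G s) (gprod G t) = gprod G w.
Proof.
  induction 1; intros HF.
  - exists []. simpl. split; auto. split; auto. apply gmul1r.
  - inversion HF; subst. destruct (IHSub H3) as [t [Ht [Hl He]]].
    exists t. simpl. split; auto. split; [lia|]. rewrite <- gmulA, He. reflexivity.
  - inversion HF; subst. destruct (IHSub H3) as [t [Ht [Hl He]]].
    set (S := gprod G s) in *.
    exists (gmul G (gmul G (ginv G S) a) S :: t). simpl. split.
    + constructor; auto.
    + split; [lia|]. rewrite <- He.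
      rewrite (gmulA G S), gmulA, gmulA, gmulVr, gmul1l, gmulA. reflexivity.
Qed.

Lemma least_ex (P : nat -> Prop) : (exists n, P n) -> exists n, P n /\ forall m, P m -> n <= m.
Proof.
  intros [n Hn]. revert Hn. induction n as [n IH] using lt_wf_ind. intros Hn.
  destruct (classic (exists m, m < n /\ P m)) as [[m [Hm1 Hm2]]|Hno].
  - exact (IH m Hm1 Hm2).
  - exists n. split; auto. intros m Hm. destruct (Nat.lt_ge_cases m n); auto.
    exfalso. apply Hno. eauto.
Qed.

Lemma ell_spec h : Mon G X h -> is_min_len G X h (ell G X h).
Proof.
  intros HM. unfold ell. apply epsilon_spec.
  destruct (least_ex _ HM) as [n [H1 H2]]. exists n. split; auto.
Qed.

Lemma ell_le h w : Forall X w -> gprod G w = h -> ell G X h <= length w.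
Proof.
  intros HF He. assert (HM : Mon G X h) by (exists (length w); exists w; auto).
  apply (proj2 (ell_spec h HM)). exists w; auto.
Qed.

Lemma min_word h : Mon G X h -> exists w, Forall X w /\ gprod G w = h /\ length w = ell G X h.
Proof.
  intros HM. destruct (ell_spec h HM) as [[w [H1 [H2 H3]]] _]. exists w; auto.
Qed.

Lemma ell_mul a b : Mon G X a -> Mon G X b -> ell G X (gmul G a b) <= ell G X a + ell G X b.
Proof.
  intros Ha Hb. destruct (min_word a Ha) as [wa [A1 [A2 A3]]].
  destruct (min_word b Hb) as [wb [B1 [B2 B3]]].
  rewrite <- A3, <- B3, <- length_app. apply ell_le.
  apply Forall_app; auto. rewrite gprod_app; congruence.
Qed.

End Grp.

Theorem lemma2p4 (G : Group) (X : G -> Prop)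
  (hgen : generates G X) (hconj : conj_closed G X)
  (g : G) (hg : Mon G X g)
  (n : nat) (x : nat -> G)
  (hx : forall j, 1 <= j <= n -> Mon G X (x j))
  (hprod : gprod G (map x (seq 1 n)) = g)
  (hlen : list_sum (map (fun j => ell G X (x j)) (seq 1 n)) = ell G X g)
  (k : nat) (i : nat -> nat)
  (hk : 1 <= k)
  (hi1 : 1 <= i 1)
  (hinc : forall j, 1 <= j < k -> i j < i (S j))
  (hik : i k <= n) :
  interval1 G X g (gprod G (map (fun j => x (i j)) (seq 1 k))).
Proof.
  set (P := fun j w => Forall X w /\ gprod G w = x j /\ length w = ell G X (x j)).
  set (W := fun j => epsilon (inhabits []) (P j)).
  assert (HW : forall j, 1 <= j <= n -> P j (W j)).
  { intros j Hj. apply epsilon_spec. apply min_word; auto. }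
  assert (Hrng : forall j, 1 <= j <= k -> 1 <= i j <= n).
  { assert (forall d j, 1 <= j -> j + d = k -> i j <= i k).
    { induction d; intros j H1 H2. replace j with k by lia. lia.
      specialize (IHd (S j) ltac:(lia) ltac:(lia)). specialize (hinc j ltac:(lia)). lia. }
    intros j Hj. split.
    - destruct (Nat.eq_dec j 1). subst; lia.
      destruct j as [|j']; [lia|]. specialize (hinc j' ltac:(lia)).
      lia.
    - specialize (H (k - j) j ltac:(lia) ltac:(lia)). lia. }
  set (w := concat (map W (seq 1 n))).
  set (s := concat (map W (map i (seq 1 k)))).
  assert (Hsub : Sub s w).
  { apply Sub_concat, Sub_map. apply Sub_idx.
    - intros j Hj. specialize (Hrng j ltac:(lia)). lia.
    - intros j H1 H2. apply hinc; lia. }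
  assert (HFw : Forall X w).
  { apply Forall_concat, Forall_forall. intros v Hv. apply in_map_iff in Hv.
    destruct Hv as [j [<- Hj]]. apply in_seq in Hj. apply (HW j); lia. }
  assert (Hgw : gprod G w = g).
  { unfold w. rewrite gprod_concat, map_map, <- hprod. f_equal.
    apply map_ext_in. intros j Hj. apply in_seq in Hj. apply (HW j); lia. }
  assert (Hlw : length w = ell G X g).
  { unfold w. rewrite len_concat, map_map, <- hlen. f_equal.
    apply map_ext_in. intros j Hj. apply in_seq in Hj. apply (HW j); lia. }
  assert (Hys : gprod G s = gprod G (map (fun j => x (i j)) (seq 1 k))).
  { unfold s. rewrite gprod_concat, !map_map. f_equal.
    apply map_ext_in. intros j Hj. apply in_seq in Hj. apply (HW (i j)), Hrng; lia. }
  assert (HFs : Forall X s).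
  { apply Forall_concat, Forall_forall. intros v Hv. apply in_map_iff in Hv.
    destruct Hv as [j [<- Hj]]. apply in_map_iff in Hj. destruct Hj as [j' [<- Hj']].
    apply in_seq in Hj'. apply (HW (i j')), Hrng; lia. }
  destruct (Sub_conj G X hconj s w Hsub HFw) as [t [HFt [Hlt Het]]].
  set (y := gprod G (map (fun j => x (i j)) (seq 1 k))) in *.
  assert (My : Mon G X y) by (exists (length s); exists s; auto).
  assert (Mz : Mon G X (gprod G t)) by (exists (length t); exists t; auto).
  split; auto. split; auto. split; auto.
  exists (gprod G t). split; auto. split. rewrite <- Hys, Het; auto.
  pose proof (ell_le G X y s HFs Hys). pose proof (ell_le G X _ t HFt eq_refl).
  pose proof (ell_mul G X y (gprod G t) My Mz).
  assert (E : gmul G y (gprod G t) = g) by (rewrite <- Hys, Het; auto).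
  rewrite E in H1. lia.
Qed.
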